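(* Let $g(t)$, $t\in[0,T)$, be the maximal Ricci flow solution on $S^1\times S^3$ of the form $g(t)=\phi^2dz^2+a^2\omega^1\otimes\omega^1+b^2\omega^2\otimes\omega^2+c^2\omega^3\otimes\omega^3$ starting from initial data with $0<a\le b\le c$, and let $\hat c(t)=\max_s c(s,t)$. Then the singular time satisfies $T\le \frac{\hat c(0)^2}{4}$.
   Context: $S^3=SU(2)$ carries a global left-invariant frame $E_1,E_2,E_3$ with $[E_i,E_j]=-2\epsilon_{ijk}E_k$ and dual coframe $\omega^i$; $z\in S^1=[0,2\pi)$, $\phi,a,b,c$ positive smooth $2\pi$-periodic functions; $s$ is the arclength coordinate $ds=\phi\,dz$. The Ricci flow $\partial_tg=-2\mathrm{Ric}(g)$ preserves this form. *)

(* Defs.v *)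
From Stdlib Require Import Reals Lra.
From Coquelicot Require Import Coquelicot.
Open Scope R_scope.

(* A cohomogeneity-one metric on S^1 x S^3 along the flow is encoded by four
   functions (z,t) |-> phi, a, b, c, 2*PI-periodic in z.  *)

Definition pz (f : R -> R -> R) : R -> R -> R :=
  fun z t => Derive (fun x => f x t) z.
Definition pt (f : R -> R -> R) : R -> R -> R :=
  fun z t => Derive (fun s => f z s) t.
(* arclength derivative d/ds = (1/phi) d/dz *)
Definition ps (phi f : R -> R -> R) : R -> R -> R :=
  fun z t => pz f z t / phi z t.

Definition cont_on (T : R) (g : R -> R -> R) : Prop :=
  forall z t, 0 <= t < T ->
    filterlim (fun p : R * R => g (fst p) (snd p))
      (within (fun p : R * R => 0 <= snd p < T) (locally (z, t)))
      (locally (g z t)).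

Definition smooth_upto (T : R) (f : R -> R -> R) : Prop :=
  cont_on T f /\
  exists S : (R -> R -> R) -> Prop, S f /\
    forall g, S g ->
      (forall z t, 0 < t < T ->
          ex_derive (fun x => g x t) z /\ ex_derive (fun s => g z s) t) /\
      (exists h, cont_on T h /\ forall z t, 0 < t < T -> h z t = g z t) /\
      S (pz g) /\ S (pt g).

Definition periodic2pi (f : R -> R -> R) : Prop :=
  forall z t, f (z + 2 * PI) t = f z t.

(* Ricci flow  d/dt g = -2 Ric(g)  for
     g = phi^2 dz^2 + a^2 w1^2 + b^2 w2^2 + c^2 w3^2,
   [E_i,E_j] = -2 eps_ijk E_k, written with the arclength derivative. *)
Definition ricci_flow_eqs (phi a b c : R -> R -> R) (z t : R) : Prop :=
  let as_ := ps phi a in let bs := ps phi b in let cs := ps phi c in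
  let ass := ps phi as_ in let bss := ps phi bs in let css := ps phi cs in
  let A := a z t in let B := b z t in let C := c z t in
  pt a z t = ass z t + as_ z t * (bs z t / B + cs z t / C)
             - 2 * (A ^ 4 - (B ^ 2 - C ^ 2) ^ 2) / (A * B ^ 2 * C ^ 2) /\
  pt b z t = bss z t + bs z t * (as_ z t / A + cs z t / C)
             - 2 * (B ^ 4 - (A ^ 2 - C ^ 2) ^ 2) / (A ^ 2 * B * C ^ 2) /\
  pt c z t = css z t + cs z t * (as_ z t / A + bs z t / B)
             - 2 * (C ^ 4 - (A ^ 2 - B ^ 2) ^ 2) / (A ^ 2 * B ^ 2 * C) /\
  pt phi z t = phi z t * (ass z t / A + bss z t / B + css z t / C).

Definition RF_solution (T : R) (phi a b c : R -> R -> R) : Prop :=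
  0 < T /\
  smooth_upto T phi /\ smooth_upto T a /\ smooth_upto T b /\ smooth_upto T c /\
  periodic2pi phi /\ periodic2pi a /\ periodic2pi b /\ periodic2pi c /\
  (forall z t, 0 <= t < T -> 0 < phi z t /\ 0 < a z t /\ 0 < b z t /\ 0 < c z t) /\
  (forall z t, 0 < t < T -> ricci_flow_eqs phi a b c z t).

(* Main.v *)
Require Import Defs.
From Stdlib Require Import Reals Lra Classical.
From Coquelicot Require Import Coquelicot.
Open Scope R_scope.


Lemma cont_ball T g z t : cont_on T g -> 0 <= t < T -> forall e, 0 < e ->
  exists r, 0 < r /\ forall z' t', Rabs (z' - z) < r -> Rabs (t' - t) < r -> 0 <= t' < T ->
     Rabs (g z' t' - g z t) < e.
Proof.
  intros Hc Ht e He.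
  specialize (Hc z t Ht (ball (g z t) (mkposreal e He)) (locally_ball _ _)).
  destruct Hc as [r Hr].
  exists (pos r). split. apply cond_pos.
  intros z' t' H1 H2 H3.
  specialize (Hr (z', t')). simpl in Hr.
  assert (B : ball (z, t) r (z', t')).
  { split; simpl; unfold ball; simpl; unfold AbsRing_ball; simpl; unfold abs, minus, plus, opp; simpl; exact H1 || exact H2. }
  specialize (Hr B H3). unfold ball in Hr; simpl in Hr; unfold AbsRing_ball in Hr; simpl in Hr.
  unfold abs, minus, plus, opp in Hr; simpl in Hr. exact Hr.
Qed.

Lemma cont_strict T g z t L K : cont_on T g -> 0 <= t < T -> g z t ^ 2 + L * t < K ->
  exists r, 0 < r /\ forall z' t', Rabs (z' - z) < r -> Rabs (t' - t) < r -> 0 <= t' < T ->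
     g z' t' ^ 2 + L * t' < K.
Proof.
  intros Hc Ht Hlt.
  set (g0 := g z t). set (gap := K - (g0 ^ 2 + L * t)).
  assert (Hgap : 0 < gap) by (unfold gap, g0; lra).
  set (e := Rmin 1 (gap / (4 * (Rabs g0 + 1)))).
  assert (Ha0 : 0 <= Rabs g0) by apply Rabs_pos.
  assert (He : 0 < e). { unfold e. apply Rmin_glb_lt. lra. apply Rdiv_lt_0_compat; lra. }
  assert (He1 : e <= 1) by apply Rmin_l.
  assert (He2 : e * (4 * (Rabs g0 + 1)) <= gap).
  { assert (e <= gap / (4 * (Rabs g0 + 1))) by apply Rmin_r.
    apply Rmult_le_compat_r with (r := 4 * (Rabs g0 + 1)) in H; [|lra].
    field_simplify in H; lra. }
  destruct (cont_ball T g z t Hc Ht e He) as [r1 [Hr1 H1]].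
  set (r2 := gap / (4 * (Rabs L + 1))).
  assert (Hr2 : 0 < r2) by (unfold r2; apply Rdiv_lt_0_compat; [lra| pose proof (Rabs_pos L); lra]).
  exists (Rmin r1 r2). split. apply Rmin_glb_lt; lra.
  intros z' t' Hz Htt Hd.
  assert (Hz1 : Rabs (z' - z) < r1) by (eapply Rlt_le_trans; [exact Hz| apply Rmin_l]).
  assert (Ht1 : Rabs (t' - t) < r1) by (eapply Rlt_le_trans; [exact Htt| apply Rmin_l]).
  assert (Ht2 : Rabs (t' - t) < r2) by (eapply Rlt_le_trans; [exact Htt| apply Rmin_r]).
  specialize (H1 z' t' Hz1 Ht1 Hd). fold g0 in H1.
  set (d := g z' t' - g0) in *.
  assert (Hg : g z' t' = g0 + d) by (unfold d; ring).
  rewrite Hg.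
  assert (Hdg : d * g0 <= Rabs d * Rabs g0).
  { rewrite <- Rabs_mult. apply Rle_abs. }
  assert (Hd2 : d * d <= Rabs d * Rabs d).
  { rewrite <- Rabs_mult. apply Rle_abs. }
  assert (HL : L * (t' - t) <= Rabs L * Rabs (t' - t)).
  { rewrite <- Rabs_mult. apply Rle_abs. }
  assert (HLr : Rabs L * Rabs (t' - t) <= Rabs L * r2).
  { apply Rmult_le_compat_l. apply Rabs_pos. lra. }
  assert (HLr2 : Rabs L * r2 < gap / 2).
  { unfold r2. pose proof (Rabs_pos L).
    apply Rmult_lt_reg_r with (4 * (Rabs L + 1)). lra. field_simplify; try lra. nra. }
  assert (Hdd : Rabs d * Rabs d <= e * Rabs d) by (apply Rmult_le_compat_r; [apply Rabs_pos|lra]).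
  assert (Hdd2 : e * Rabs d <= e * e) by (apply Rmult_le_compat_l; lra).
  assert (Hdd3 : Rabs d * Rabs g0 <= e * Rabs g0) by (apply Rmult_le_compat_r; [apply Rabs_pos|lra]).
  assert (K = g0 ^ 2 + L * t + gap) by (unfold gap; ring).
  nra.
Qed.

Lemma tube (Q : R -> R -> Prop) (lo hi t0 : R) : lo <= hi ->
  (forall z, lo <= z <= hi -> exists r, 0 < r /\
      forall z' t', Rabs (z' - z) < r -> Rabs (t' - t0) < r -> Q z' t') ->
  exists d, 0 < d /\ forall z t, lo <= z <= hi -> Rabs (t - t0) < d -> Q z t.
Proof.
  intros Hlh Hop.
  set (E := fun x => lo <= x <= hi /\ exists d, 0 < d /\
        forall z t, lo <= z <= x -> Rabs (t - t0) < d -> Q z t).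
  assert (HE0 : E lo).
  { split. lra. destruct (Hop lo ltac:(lra)) as [r [Hr Hq]]. exists r. split; auto.
    intros z t Hz Ht. apply Hq; auto. replace (z - lo) with 0 by lra. rewrite Rabs_R0; lra. }
  assert (Hb : bound E) by (exists hi; intros x [Hx _]; lra).
  destruct (completeness E Hb (ex_intro _ lo HE0)) as [m [Hub Hlub]].
  assert (Hm1 : lo <= m) by (apply Hub; auto).
  assert (Hm2 : m <= hi) by (apply Hlub; intros x [Hx _]; lra).
  destruct (Hop m ltac:(lra)) as [r [Hr Hq]].
  assert (Hx : exists x, E x /\ m - r < x).
  { apply NNPP; intro Hn.
    assert (is_upper_bound E (m - r)).
    { intros x Hx. apply Rnot_lt_le. intro. apply Hn. exists x; auto. }
    apply Hlub in H. lra. }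
  destruct Hx as [x [[Hx1 [dx [Hdx Hqx]]] Hxm]].
  set (x' := Rmin (m + r / 2) hi).
  assert (HE' : E x').
  { split. unfold x'. split. apply Rmin_glb; lra. apply Rmin_r.
    exists (Rmin dx r). split. apply Rmin_glb_lt; lra.
    intros z t Hz Ht.
    destruct (Rle_or_lt z x) as [Hzx|Hzx].
    - apply Hqx. lra. eapply Rlt_le_trans; [exact Ht| apply Rmin_l].
    - apply Hq. assert (z <= m + r/2) by (pose proof (Rmin_l (m + r/2) hi); unfold x' in Hz; lra).
      apply Rabs_def1; lra.
      eapply Rlt_le_trans; [exact Ht| apply Rmin_r]. }
  assert (x' <= m) by (apply Hub; auto).
  assert (Hx'hi : x' = hi).
  { unfold x' in *. destruct (Rle_or_lt (m + r/2) hi).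
    rewrite Rmin_left in H; lra. rewrite Rmin_right; lra. }
  rewrite Hx'hi in HE'. destruct HE' as [_ [d [Hd Hqd]]]. exists d. auto.
Qed.

Lemma per_Z f (Hf : periodic2pi f) t : forall n z, f (z + 2 * PI * IZR n) t = f z t.
Proof.
  intro n. induction n using Z.peano_ind; intro z.
  - rewrite Rmult_0_r, Rplus_0_r. auto.
  - rewrite succ_IZR. replace (z + 2 * PI * (IZR n + 1)) with ((z + 2 * PI * IZR n) + 2 * PI) by ring.
    rewrite Hf. auto.
  - replace (IZR (Z.pred n)) with (IZR n - 1) by (rewrite <- Z.sub_1_r, minus_IZR; reflexivity).
    rewrite <- (Hf (z + 2 * PI * (IZR n - 1))).
    replace (z + 2 * PI * (IZR n - 1) + 2 * PI) with (z + 2 * PI * IZR n) by ring.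
    apply IHn.
Qed.

Lemma per_red z : exists z', 0 <= z' <= 2 * PI /\
  forall f, periodic2pi f -> forall t, f z t = f z' t.
Proof.
  pose proof PI_RGT_0 as Hpi.
  destruct (archimed (z / (2 * PI))) as [H1 H2].
  set (k := IZR (up (z / (2 * PI)))) in *.
  exists (z - 2 * PI * (k - 1)). split.
  - assert (z = (z / (2 * PI)) * (2 * PI)) by (field; lra).
    split; nra.
  - intros f Hf t. rewrite <- (per_Z f Hf t (1 - up (z / (2 * PI)))).
    rewrite minus_IZR. fold k. f_equal. simpl. ring.
Qed.

Lemma left_deriv f x l d : derivable_pt_lim f x l -> 0 < d ->
  (forall y, x - d < y < x -> f y <= f x) -> 0 <= l.
Proof.
  intros Hd Hdpos Hle. apply Rnot_lt_le; intro Hl.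
  destruct (Hd (- l / 2) ltac:(lra)) as [del Hdel].
  set (h := - Rmin d del / 2).
  assert (Hm : 0 < Rmin d del) by (apply Rmin_glb_lt; [lra | apply cond_pos]).
  assert (Hm1 := Rmin_l d del). assert (Hm2 := Rmin_r d del).
  assert (Hh : h <> 0) by (unfold h; lra).
  assert (Hha : Rabs h < del) by (unfold h; rewrite Rabs_left; lra).
  specialize (Hdel h Hh Hha).
  specialize (Hle (x + h) ltac:(unfold h; lra)).
  set (q := (f (x + h) - f x) / h) in *.
  assert (Hq : f (x + h) - f x = q * h) by (unfold q; field; auto).
  apply Rabs_def2 in Hdel. assert (h < 0) by (unfold h; lra). nra.
Qed.

Lemma right_deriv f x l d : derivable_pt_lim f x l -> 0 < d ->
  (forall y, x < y < x + d -> f y <= f x) -> l <= 0.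
Proof.
  intros Hd Hdpos Hle. apply Rnot_lt_le; intro Hl.
  destruct (Hd (l / 2) ltac:(lra)) as [del Hdel].
  set (h := Rmin d del / 2).
  assert (Hm : 0 < Rmin d del) by (apply Rmin_glb_lt; [lra | apply cond_pos]).
  assert (Hm1 := Rmin_l d del). assert (Hm2 := Rmin_r d del).
  assert (Hh : h <> 0) by (unfold h; lra).
  assert (Hha : Rabs h < del) by (unfold h; rewrite Rabs_right; lra).
  specialize (Hdel h Hh Hha).
  specialize (Hle (x + h) ltac:(unfold h; lra)).
  set (q := (f (x + h) - f x) / h) in *.
  assert (Hq : f (x + h) - f x = q * h) by (unfold q; field; auto).
  apply Rabs_def2 in Hdel. assert (0 < h) by (unfold h; lra). nra.
Qed.

Lemma max_deriv0 f x : ex_derive f x -> (forall y, f y <= f x) -> Derive f x = 0.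
Proof.
  intros He Hm. pose proof (proj1 (is_derive_Reals _ _ _) (Derive_correct _ _ He)) as H.
  pose proof (left_deriv _ _ _ 1 H ltac:(lra) (fun y _ => Hm y)).
  pose proof (right_deriv _ _ _ 1 H ltac:(lra) (fun y _ => Hm y)). lra.
Qed.

Lemma second_deriv g z : (forall x, ex_derive g x) -> ex_derive (Derive g) z ->
  (forall x, g x <= g z) -> Derive (Derive g) z <= 0.
Proof.
  intros Hg Hg2 Hm.
  assert (H0 : Derive g z = 0) by (apply max_deriv0; auto).
  pose proof (proj1 (is_derive_Reals _ _ _) (Derive_correct _ _ Hg2)) as H.
  set (L := Derive (Derive g) z) in *.
  apply Rnot_lt_le; intro HL.
  destruct (H (L / 2) ltac:(lra)) as [del Hdel].
  assert (Hpos : forall c, z < c < z + del -> 0 < Derive g c).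
  { intros c Hc. specialize (Hdel (c - z) ltac:(lra) ltac:(rewrite Rabs_right; lra)).
    replace (z + (c - z)) with c in Hdel by ring. rewrite H0 in Hdel.
    apply Rabs_def2 in Hdel.
    set (q := (Derive g c - 0) / (c - z)) in *.
    assert (Derive g c = q * (c - z)) by (unfold q; field; lra). nra. }
  pose proof (cond_pos del).
  destruct (MVT_cor2 g (Derive g) z (z + del / 2) ltac:(lra)) as [c [Hc1 Hc2]].
  { intros c _. apply is_derive_Reals. apply Derive_correct. auto. }
  specialize (Hpos c ltac:(lra)). specialize (Hm (z + del / 2)). nra.
Qed.

Lemma left_cont h t K : continuity_pt h t -> 0 < t ->
  (forall s, 0 <= s < t -> h s < K) -> h t <= K.
Proof.
  intros Hc Ht Hlt. apply Rnot_lt_le; intro Hgt.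
  destruct (Hc (h t - K) ltac:(lra)) as [a [Ha Hx]].
  set (s := t - Rmin t a / 2).
  assert (Hm : 0 < Rmin t a) by (apply Rmin_glb_lt; lra).
  assert (Hm1 := Rmin_l t a). assert (Hm2 := Rmin_r t a).
  specialize (Hx s). simpl in Hx. unfold R_dist, D_x, no_cond in Hx.
  assert (Hs : Rabs (h s - h t) < h t - K).
  { apply Hx. split. split. auto. unfold s; lra. rewrite Rabs_left; unfold s; lra. }
  specialize (Hlt s ltac:(unfold s; lra)). apply Rabs_def2 in Hs. lra.
Qed.

Lemma alg U V W : 0 < V -> 0 < W -> V <= U -> W <= U ->
  2 / U <= 2 * (U ^ 4 - (V ^ 2 - W ^ 2) ^ 2) / (U * V ^ 2 * W ^ 2).
Proof.
  intros HV HW HVU HWU.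
  assert (HU : 0 < U) by lra.
  assert (Hk : V ^ 2 * W ^ 2 <= U ^ 4 - (V ^ 2 - W ^ 2) ^ 2).
  { assert (HV2 : V ^ 2 <= U ^ 2) by nra. assert (HW2 : W ^ 2 <= U ^ 2) by nra.
    assert (U ^ 4 = U^2 * U^2) by ring.
    destruct (Rle_or_lt (V^2) (W^2)); nra. }
  assert (0 < U * V ^ 2 * W ^ 2) by (apply Rmult_lt_0_compat; [apply Rmult_lt_0_compat|]; nra).
  replace (2 / U) with (2 * (V ^ 2 * W ^ 2) / (U * V ^ 2 * W ^ 2)) by (field; lra).
  unfold Rdiv; apply Rmult_le_compat_r; [apply Rlt_le, Rinv_0_lt_compat; auto | lra].
Qed.

Lemma core (phi u : R -> R -> R) z t L X :
  (forall x, ex_derive (fun x => u x t) x) -> ex_derive (fun x => pz u x t) z ->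
  ex_derive (fun x => phi x t) z -> 0 < phi z t -> ex_derive (fun s => u z s) t ->
  (forall x, u x t <= u z t) -> 0 < u z t ->
  (exists d, 0 < d /\ forall s, t - d < s < t -> u z s ^ 2 + L * s <= u z t ^ 2 + L * t) ->
  pt u z t <= ps phi (ps phi u) z t + ps phi u z t * X - 2 / u z t -> L < 4 -> False.
Proof.
  intros Hdz Hd2 Hph Hphp Hdt Hmax Hu [d [Hd Hleft]] Hpde HL.
  assert (H0 : pz u z t = 0).
  { unfold pz. apply (max_deriv0 (fun x => u x t)); auto. }
  assert (Hs0 : ps phi u z t = 0) by (unfold ps; rewrite H0; field; lra).
  assert (Hss : ps phi (ps phi u) z t <= 0).
  { unfold ps at 1. unfold pz at 1. unfold ps.
    rewrite Derive_div; auto; [|lra].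
    assert (H2 : Derive (fun x => pz u x t) z <= 0).
    { apply (second_deriv (fun x => u x t)); auto. }
    change (pz u z t) with (pz u z t). rewrite H0.
    set (D2 := Derive (fun x : R => pz u x t) z) in *.
    set (P := phi z t) in *.
    assert (0 < / P) by (apply Rinv_0_lt_compat; lra).
    replace ((D2 * P - 0 * Derive (fun y : R => phi y t) z) / P ^ 2 / P) with (D2 * (/ P * / P)) by (field; lra).
    assert (0 < / P * / P) by nra. nra. }
  rewrite Hs0 in Hpde.
  assert (Hpt : pt u z t * u z t <= -2).
  { assert (pt u z t <= - 2 / u z t) by (unfold Rdiv in *; lra).
    apply Rmult_le_compat_r with (r := u z t) in H; [|lra].
    replace (-2 / u z t * u z t) with (-2) in H by (field; lra). exact H. }
  assert (Hder : is_derive (fun s => u z s ^ 2 + L * s) t (2 * u z t * pt u z t + L)).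
  { auto_derive. exact Hdt. unfold pt. ring. }
  apply is_derive_Reals in Hder.
  pose proof (left_deriv _ _ _ d Hder Hd Hleft). nra.
Qed.

Lemma smooth_der T f : smooth_upto T f -> forall z t, 0 < t < T ->
  (forall x, ex_derive (fun x => f x t) x) /\ ex_derive (fun s => f z s) t /\
  ex_derive (fun x => pz f x t) z.
Proof.
  intros [_ [S [Sf HS]]] z t Ht.
  destruct (HS f Sf) as [H1 [_ [Sp _]]].
  destruct (HS (pz f) Sp) as [H2 _].
  split; [intro x; apply (H1 x t Ht)|]. split. apply (H1 z t Ht). apply (H2 z t Ht).
Qed.

Lemma case_u T phi u v w z m L K X :
  smooth_upto T phi -> smooth_upto T u -> 0 < m < T ->
  0 < phi z m -> 0 < u z m -> 0 < v z m -> 0 < w z m ->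
  (forall x, 0 < u x m) ->
  (forall x, u x m ^ 2 + L * m <= K) -> v z m ^ 2 + L * m <= K -> w z m ^ 2 + L * m <= K ->
  K <= u z m ^ 2 + L * m ->
  (forall s, 0 <= s < m -> u z s ^ 2 + L * s < K) ->
  pt u z m = ps phi (ps phi u) z m + ps phi u z m * X
     - 2 * (u z m ^ 4 - (v z m ^ 2 - w z m ^ 2) ^ 2) / (u z m * v z m ^ 2 * w z m ^ 2) ->
  L < 4 -> False.
Proof.
  intros Sphi Su Hm Hph Hu Hv Hw Hupos Hall Hvle Hwle HK Hleft Hpde HL.
  destruct (smooth_der T u Su z m Hm) as [D1 [D2 D3]].
  destruct (smooth_der T phi Sphi z m Hm) as [P1 _].
  apply (core phi u z m L X D1 D3 (P1 z) Hph D2); auto.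
  - intro x. specialize (Hall x). specialize (Hupos x). nra.
  - exists m. split. lra. intros s Hs. specialize (Hleft s ltac:(lra)). lra.
  - assert (v z m <= u z m) by nra. assert (w z m <= u z m) by nra.
    pose proof (alg (u z m) (v z m) (w z m) Hv Hw H H0). lra.
Qed.

Lemma cont_of_der f t : ex_derive f t -> continuity_pt f t.
Proof. intro H. apply continuity_pt_filterlim. exact (ex_derive_continuous (K:=R_AbsRing) (V:=R_NormedModule) f t H). Qed.

Lemma main_claim T phi a b c L K : RF_solution T phi a b c -> L < 4 ->
  (forall z, a z 0 ^ 2 < K /\ b z 0 ^ 2 < K /\ c z 0 ^ 2 < K) ->
  forall t z, 0 <= t < T -> a z t ^ 2 + L * t < K /\ b z t ^ 2 + L * t < K /\ c z t ^ 2 + L * t < K.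
Proof.
  intros [HT [Sphi [Sa [Sb [Sc [Pphi [Pa [Pb [Pc [Hpos Heq]]]]]]]]]] HL Hinit.
  set (Q := fun z t => 0 <= t < T -> a z t ^ 2 + L * t < K /\ b z t ^ 2 + L * t < K /\ c z t ^ 2 + L * t < K).
  assert (HQ0 : forall z, Q z 0).
  { intros z _. rewrite Rmult_0_r, !Rplus_0_r. apply Hinit. }
  apply NNPP. intro Hn.
  assert (Hbad : exists tb zb, ~ Q zb tb).
  { apply NNPP. intro H. apply Hn. intros t z. apply NNPP. intro H'. apply H. exists t, z. auto. }
  destruct Hbad as [tb [zb Hb]].
  assert (Htb : 0 <= tb < T) by (apply NNPP; intro; apply Hb; intro; contradiction).
  set (S := fun t => 0 <= t <= tb /\ forall s, 0 <= s <= t -> forall z, Q z s).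
  assert (HS0 : S 0) by (split; [lra| intros s Hs z; replace s with 0 by lra; auto]).
  assert (Hbd : bound S) by (exists tb; intros x [Hx _]; lra).
  destruct (completeness S Hbd (ex_intro _ 0 HS0)) as [m [Hub Hlub]].
  assert (Hm0 : 0 <= m) by (apply Hub; auto).
  assert (Hmb : m <= tb) by (apply Hlub; intros x [Hx _]; lra).
  assert (Hbefore : forall s, 0 <= s < m -> forall z, Q z s).
  { intros s Hs z. apply NNPP; intro HnQ.
    assert (is_upper_bound S s).
    { intros x [Hx Hxs]. apply Rnot_lt_le. intro. apply HnQ. apply Hxs. lra. }
    apply Hlub in H. lra. }
  assert (Hopen : forall t0, 0 <= t0 < T -> forall z, Q z t0 -> exists r, 0 < r /\
      forall z' t', Rabs (z' - z) < r -> Rabs (t' - t0) < r -> Q z' t').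
  { intros t0 Ht0 z Hq. destruct (Hq Ht0) as [Q1 [Q2 Q3]].
    destruct (cont_strict T a z t0 L K (proj1 Sa) Ht0 Q1) as [r1 [Hr1 R1]].
    destruct (cont_strict T b z t0 L K (proj1 Sb) Ht0 Q2) as [r2 [Hr2 R2]].
    destruct (cont_strict T c z t0 L K (proj1 Sc) Ht0 Q3) as [r3 [Hr3 R3]].
    exists (Rmin r1 (Rmin r2 r3)). split. repeat apply Rmin_glb_lt; auto.
    intros z' t' Hz Ht Hd.
    pose proof (Rmin_l r1 (Rmin r2 r3)). pose proof (Rmin_r r1 (Rmin r2 r3)).
    pose proof (Rmin_l r2 r3). pose proof (Rmin_r r2 r3).
    split; [apply R1|split; [apply R2|apply R3]]; auto; lra. }
  assert (Hper : forall z t, exists z', 0 <= z' <= 2 * PI /\ (Q z' t -> Q z t)).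
  { intros z t. destruct (per_red z) as [z' [Hz' Hf]]. exists z'. split; auto.
    unfold Q. rewrite (Hf a Pa t), (Hf b Pb t), (Hf c Pc t). auto. }
  assert (Hatm : exists z, ~ Q z m).
  { apply NNPP. intro Hno.
    assert (Hall : forall z, Q z m) by (intro z; apply NNPP; intro; apply Hno; exists z; auto).
    assert (HmT : 0 <= m < T) by lra.
    destruct (tube Q 0 (2 * PI) m ltac:(pose proof PI_RGT_0; lra)
       (fun z _ => Hopen m HmT z (Hall z))) as [d [Hd Hqd]].
    set (t' := Rmin (m + d / 2) tb).
    assert (HS' : S t').
    { unfold t'. split. split. apply Rmin_glb; lra. apply Rmin_r.
      intros s Hs z. destruct (Rlt_or_le s m). apply Hbefore; lra.
      destruct (Hper z s) as [z' [Hz' Himp]]. apply Himp. apply Hqd; auto.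
      pose proof (Rmin_l (m + d / 2) tb). apply Rabs_def1; lra. }
    assert (t' <= m) by (apply Hub; auto).
    assert (tb <= m).
    { unfold t' in H. destruct (Rle_or_lt (m + d/2) tb).
      rewrite Rmin_left in H; lra. rewrite Rmin_right in H; lra. }
    apply Hb. replace tb with m by lra. auto. }
  destruct Hatm as [zs Hzs].
  assert (HmT : 0 <= m < T) by lra.
  assert (Hmpos : 0 < m).
  { destruct Hm0 as [|H0]; auto. exfalso. apply Hzs. rewrite <- H0. auto. }
  assert (Hm : 0 < m < T) by lra.
  assert (Hle : forall (u : R -> R -> R), smooth_upto T u ->
      (forall x s, 0 <= s < m -> u x s ^ 2 + L * s < K) -> forall x, u x m ^ 2 + L * m <= K).
  { intros u Su Hlt x.
    destruct (smooth_der T u Su x m Hm) as [_ [Dt _]].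
    apply (left_cont (fun s => u x s ^ 2 + L * s) m K); auto.
    apply cont_of_der. auto_derive. exact Dt. }
  assert (Ha : forall x, a x m ^ 2 + L * m <= K).
  { apply Hle; auto. intros x s Hs. apply (Hbefore s Hs x). lra. }
  assert (Hbb : forall x, b x m ^ 2 + L * m <= K).
  { apply Hle; auto. intros x s Hs. apply (Hbefore s Hs x). lra. }
  assert (Hc : forall x, c x m ^ 2 + L * m <= K).
  { apply Hle; auto. intros x s Hs. apply (Hbefore s Hs x). lra. }
  assert (Hp : forall x, 0 < phi x m /\ 0 < a x m /\ 0 < b x m /\ 0 < c x m) by (intro; apply Hpos; lra).
  destruct (Hp zs) as [P0 [P1 [P2 P3]]].
  destruct (Heq zs m Hm) as [Ea [Eb [Ec _]]].
  unfold Q in Hzs.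
  assert (Hcase : K <= a zs m ^ 2 + L * m \/ K <= b zs m ^ 2 + L * m \/ K <= c zs m ^ 2 + L * m).
  { apply NNPP. intro H. apply Hzs. intros _. split; [|split]; apply Rnot_le_lt; intro; apply H; auto. }
  destruct Hcase as [H|[H|H]].
  - eapply (case_u T phi a b c zs m L K); eauto.
    + intro x; apply Hp.
    + intros s Hs. apply (Hbefore s Hs zs). lra.
  - eapply (case_u T phi b a c zs m L K); eauto.
    + intro x; apply Hp.
    + intros s Hs. apply (Hbefore s Hs zs). lra.
    + rewrite Eb. replace (a zs m ^ 2 * b zs m * c zs m ^ 2) with (b zs m * a zs m ^ 2 * c zs m ^ 2) by ring.
      reflexivity.
  - eapply (case_u T phi c a b zs m L K); eauto.
    + intro x; apply Hp.
    + intros s Hs. apply (Hbefore s Hs zs). lra.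
    + rewrite Ec. replace (a zs m ^ 2 * b zs m ^ 2 * c zs m) with (c zs m * a zs m ^ 2 * b zs m ^ 2) by ring.
      reflexivity.
Qed.

Theorem corollary4p4 (T : R) (phi a b c : R -> R -> R) (chat0 : R) :
  RF_solution T phi a b c ->
  (forall z, a z 0 <= b z 0 /\ b z 0 <= c z 0) ->
  (exists z0, c z0 0 = chat0) ->
  (forall z, c z 0 <= chat0) ->
  T <= chat0 ^ 2 / 4.
Proof.
  intros Hrf Hord _ Hmax.
  assert (Hpos0 : forall z, 0 < phi z 0 /\ 0 < a z 0 /\ 0 < b z 0 /\ 0 < c z 0).
  { intro z. destruct Hrf as [HT [_ [_ [_ [_ [_ [_ [_ [_ [Hp _]]]]]]]]]]. apply Hp. lra. }
  apply Rnot_lt_le. intro HTb.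
  set (t1 := (chat0 ^ 2 / 4 + T) / 2).
  set (e := (4 * t1 - chat0 ^ 2) / (t1 + 1)).
  assert (Hc2 : 0 <= chat0 ^ 2) by (apply pow2_ge_0).
  assert (Ht1 : 0 < t1 < T) by (unfold t1; lra).
  assert (He : 0 < e) by (unfold e; apply Rdiv_lt_0_compat; unfold t1; lra).
  assert (Hee : e * (t1 + 1) = 4 * t1 - chat0 ^ 2) by (unfold e; field; lra).
  assert (Hinit : forall z, a z 0 ^ 2 < chat0 ^ 2 + e /\ b z 0 ^ 2 < chat0 ^ 2 + e /\ c z 0 ^ 2 < chat0 ^ 2 + e).
  { intro z. destruct (Hpos0 z) as [_ [Pa [Pb Pc]]]. destruct (Hord z). pose proof (Hmax z).
    split; [|split]; nra. }
  destruct (main_claim T phi a b c (4 - e) (chat0 ^ 2 + e) Hrf ltac:(lra) Hinit t1 0 ltac:(lra)) as [_ [_ Hc]].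
  pose proof (pow2_ge_0 (c 0 t1)). nra.
Qed.
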